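(* Let $W$ be a finite reflection group acting linearly on a Euclidean vector space $\mathbb{E}$, and let $Z\subseteq\mathbb{E}$ be a $W$-invariant convex polytope. For $v\in\mathbb{E}$ let $n=v-\mathrm{pr}_Z(v)$. Then every (closed) $W$-chamber that contains $v$ also contains $n$.
   Context: $\mathrm{pr}_Z$ is the nearest-point projection onto $Z$. The $W$-chambers are the closed simplicial cones cut out by the reflection hyperplanes of $W$. *)

(* Defs.v *)
(* Euclidean space = row vectors 'rV[R]_d over a real field R. *)
From HB Require Import structures.
From mathcomp Require Import all_boot all_order all_algebra.
Set Implicit Arguments. Unset Strict Implicit. Unset Printing Implicit Defensive.
Import Order.TTheory GRing.Theory Num.Theory.
Local Open Scope ring_scope.

Definition dotv (R : realFieldType) (d : nat) (u v : 'rV[R]_d) : R :=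
  \sum_(i < d) u 0 i * v 0 i.

(* orthogonal reflection through the hyperplane a^perp (a <> 0), acting on
   row vectors from the right: x *m reflmx a = x - 2 (x.a)/(a.a) a *)
Definition reflmx (R : realFieldType) (d : nat) (a : 'rV[R]_d) : 'M[R]_d :=
  1%:M - (2 / dotv a a) *: (a^T *m a).

Definition is_reflection_root (R : realFieldType) (d : nat)
    (W : seq 'M[R]_d) (a : 'rV[R]_d) : Prop :=
  a != 0 /\ reflmx a \in W.

(* W (given by the finite list of its elements) is a finite reflection group
   acting on 'rV_d by x |-> x *m w: it contains 1, is closed under products,
   and every element is a product of reflections belonging to W. *)
Definition finite_reflection_group (R : realFieldType) (d : nat)
    (W : seq 'M[R]_d) : Prop :=
  [/\ 1%:M \in W,
      (forall w1 w2, w1 \in W -> w2 \in W -> w1 *m w2 \in W) &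
      (forall w, w \in W -> exists rs : seq 'rV[R]_d,
          (forall a, a \in rs -> is_reflection_root W a) /\
          w = foldr (fun a M => reflmx a *m M) 1%:M rs)].

Definition in_hull (R : realFieldType) (d : nat) (S : seq 'rV[R]_d)
    (x : 'rV[R]_d) : Prop :=
  exists lam : 'I_(size S) -> R,
    [/\ (forall i, 0 <= lam i), \sum_i lam i = 1 &
        x = \sum_i lam i *: S`_i].

Definition is_nearest (R : realFieldType) (d : nat) (Z : 'rV[R]_d -> Prop)
    (v p : 'rV[R]_d) : Prop :=
  Z p /\ forall z, Z z -> dotv (v - p) (v - p) <= dotv (v - z) (v - z).

Definition regular_point (R : realFieldType) (d : nat) (W : seq 'M[R]_d)
    (c : 'rV[R]_d) : Prop :=
  forall a, is_reflection_root W a -> dotv a c != 0.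

(* the closed W-chamber containing the regular point c: the closure of the
   connected component of the complement of the reflection hyperplanes
   that contains c *)
Definition chamber (R : realFieldType) (d : nat) (W : seq 'M[R]_d)
    (c : 'rV[R]_d) (x : 'rV[R]_d) : Prop :=
  forall a, is_reflection_root W a -> 0 <= dotv a c * dotv a x.

(* Main.v *)
Require Import Defs.
From HB Require Import structures.
From mathcomp Require Import all_boot all_order all_algebra.
Import Order.TTheory GRing.Theory Num.Theory.
Local Open Scope ring_scope.

Section Aux.
Variables (R : realFieldType) (d : nat).
Implicit Types (u v w x : 'rV[R]_d).

Lemma dotvC u v : dotv u v = dotv v u.
Proof. by rewrite /dotv; apply: eq_bigr => i _; rewrite mulrC. Qed.

Lemma dotvDr u v w : dotv u (v + w) = dotv u v + dotv u w.
Proof. by rewrite /dotv -big_split; apply: eq_bigr => i _; rewrite mxE mulrDr. Qed.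

Lemma dotvZr u v k : dotv u (k *: v) = k * dotv u v.
Proof. by rewrite /dotv mulr_sumr; apply: eq_bigr => i _; rewrite mxE mulrCA. Qed.

Lemma dotvNr u v : dotv u (- v) = - dotv u v.
Proof. by rewrite -scaleN1r dotvZr mulN1r. Qed.

Lemma dotvBr u v w : dotv u (v - w) = dotv u v - dotv u w.
Proof. by rewrite dotvDr dotvNr. Qed.

Lemma dotvDl u v w : dotv (v + w) u = dotv v u + dotv w u.
Proof. by rewrite dotvC dotvDr !(dotvC u). Qed.

Lemma dotvZl u v k : dotv (k *: v) u = k * dotv v u.
Proof. by rewrite dotvC dotvZr dotvC. Qed.

Lemma dotvBl u v w : dotv (v - w) u = dotv v u - dotv w u.
Proof. by rewrite dotvC dotvBr !(dotvC u). Qed.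

Lemma dotv_ge0 u : 0 <= dotv u u.
Proof. by apply: sumr_ge0 => i _; rewrite -expr2 sqr_ge0. Qed.

Lemma dotv_gt0 u : u != 0 -> 0 < dotv u u.
Proof.
move=> nz; rewrite lt_def dotv_ge0 andbT; apply/negP => /eqP H.
move/negP: nz; apply; apply/eqP/matrixP => i j; rewrite !ord1 mxE.
have Hs : forall k : 'I_d, true -> 0 <= u 0 k * u 0 k.
  by move=> k _; rewrite -expr2 sqr_ge0.
have := (@psumr_eq0P _ _ _ _ Hs H j isT).
by rewrite -expr2 => /eqP; rewrite sqrf_eq0 => /eqP.
Qed.

Lemma reflE x a : x *m reflmx a = x - (2 / dotv a a * dotv x a) *: a.
Proof.
rewrite /reflmx mulmxBr mulmx1 -scalemxAr mulmxA.
have -> : x *m a^T = (dotv x a)%:M.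
  apply/matrixP => i j; rewrite !ord1 !mxE /= mulr1n /dotv.
  by apply: eq_bigr => k _; rewrite !mxE.
by rewrite mul_scalar_mx scalerA.
Qed.

Lemma hull_conv (S : seq 'rV[R]_d) x y t :
  0 <= t -> t <= 1 -> in_hull S x -> in_hull S y ->
  in_hull S ((1 - t) *: x + t *: y).
Proof.
move=> t0 t1 [lam [l0 l1 ->]] [mu [m0 m1 ->]].
exists (fun i => (1 - t) * lam i + t * mu i); split.
- by move=> i; rewrite addr_ge0 // mulr_ge0 // subr_ge0.
- by rewrite big_split /= -!mulr_sumr l1 m1 !mulr1 subrK.
- symmetry; rewrite (eq_bigr (fun i => (1-t)*:(lam i *: S`_i) + t*:(mu i *: S`_i))); last by move=> i _; rewrite !scalerA -scalerDl.
  by rewrite big_split /= -!scaler_sumr.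
Qed.

Lemma expand u w t :
  dotv (u - t *: w) (u - t *: w) =
  dotv u u - (t * dotv u w) *+ 2 + t ^+ 2 * dotv w w.
Proof.
rewrite dotvBl !dotvBr !dotvZl !dotvZr (dotvC w u).
rewrite mulrA -expr2 mulr2n opprB opprD. 
by rewrite !addrA [RHS]addrAC.
Qed.

Lemma variational (S : seq 'rV[R]_d) v p z :
  is_nearest (in_hull S) v p -> in_hull S z -> dotv (v - p) (z - p) <= 0.
Proof.
move=> [Hp Hn] Hz.
set D := dotv (v - p) (z - p); set N := dotv (z - p) (z - p).
have key : forall t, 0 <= t -> t <= 1 -> (t * D) *+ 2 <= t ^+ 2 * N.
  move=> t t0 t1; have := Hn _ (@hull_conv S p z t t0 t1 Hp Hz).
  have -> : v - ((1 - t) *: p + t *: z) = (v - p) - t *: (z - p).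
    by rewrite scalerBl scale1r scalerBr !opprD !opprK !addrA [RHS]addrAC.
  rewrite expand -/D -/N -addrA lerDl.
  by rewrite addrC subr_ge0.
rewrite leNgt; apply/negP => Dpos.
have N2 := key 1 ler01 (lexx _); rewrite mul1r expr1n mul1r in N2.
have Npos : 0 < N by apply: lt_le_trans N2; rewrite mulr2n addr_gt0.
have t0 : 0 <= D / N by rewrite divr_ge0 // ltW.
have t1 : D / N <= 1.
  by rewrite ler_pdivrMr // mul1r (le_trans _ N2) // mulr2n lerDl ltW.
have := key _ t0 t1.
have -> : (D / N) ^+ 2 * N = D / N * D.
  by rewrite expr2 -mulrA divfK ?gt_eqF.
rewrite mulr2n gerDl.
by rewrite leNgt (mulr_gt0 _ Dpos) // divr_gt0.
Qed.

End Aux.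

Theorem mainTheorem18 (R : realFieldType) (d : nat) (W : seq 'M[R]_d)
    (S : seq 'rV[R]_d) (v p : 'rV[R]_d) :
  finite_reflection_group W ->
  (forall w x, w \in W -> in_hull S x -> in_hull S (x *m w)) ->
  is_nearest (in_hull S) v p ->
  forall c : 'rV[R]_d, regular_point W c ->
    chamber W c v -> chamber W c (v - p).
Proof.
move=> _ Hinv Hnear c Hreg Hv a Ha.
have Ac := Hreg a Ha; have AV := Hv a Ha.
have [anz aW] := Ha.
have Hps := Hinv _ _ aW Hnear.1.
have := @variational _ _ S v p _ Hnear Hps.
rewrite reflE addrAC subrr add0r dotvNr dotvZr oppr_le0.
rewrite dotvBr.
set A := dotv a c; set V := dotv a v; set P := dotv a p.
rewrite (@dotvC _ _ p a) (@dotvC _ _ (v - p) a) dotvBr -/V -/P.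
have aa := @dotv_gt0 _ _ a anz. rewrite -/A -/V in AV Ac.
rewrite -!mulrA => HP0. have HP : 0 <= P * (V - P) by move: HP0; rewrite pmulr_rge0 // pmulr_rge0 ?invr_gt0.

have [Aneg|Apos|A0] := ltgtP A 0.
-
  rewrite nmulr_rge0 // in AV; rewrite nmulr_rge0 //.
  have [Pn|Pp] := ltP P 0.
    by rewrite -(nmulr_rge0 _ Pn).
  by rewrite subr_le0 (le_trans AV).
- rewrite pmulr_rge0 // in AV; rewrite pmulr_rge0 //.
  have [Pp|Pn] := ltP 0 P.
    by rewrite -(pmulr_rge0 _ Pp).
  by rewrite subr_ge0 (le_trans Pn).
- by move: Ac; rewrite A0 eqxx.
Qed.
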